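(* For every $d\ge1$ and every unlabeled pool $S_u\subseteq\mathbb{R}_+^d$ of size $m$, the auditing complexity of $S_u$ with respect to $\mathcal{H}_\Box$ is at most $d$.
   Context: For $\mathbf a\in\mathbb{R}_+^d$, $h_{\mathbf a}(x)=2\mathbb{I}[\exists i\in[d],\ x[i]\ge a[i]]-1$, and $\mathcal{H}_\Box=\{h_{\mathbf a}:\mathbf a\in\mathbb{R}_+^d\}$ (points outside the ''rectangle'' are positive). The auditing complexity of a finite unlabeled pool $S_u$ with respect to a class $\mathcal{H}$ is the minimum, over algorithms that sequentially query labels of points of $S_u$ and that for every labeling of $S_u$ consistent with some $h\in\mathcal{H}$ output (with probability 1) a hypothesis with zero error on the labeled pool, of the worst case (over such labelings) number of queried points whose label is $-1$. *)

(* Defs.v *)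
From mathcomp Require Import all_boot all_order all_algebra.
From mathcomp Require Import reals.
Set Implicit Arguments. Unset Strict Implicit. Unset Printing Implicit Defensive.
Import Order.TTheory GRing.Theory Num.Theory.
Local Open Scope ring_scope.

Section Auditing.
Variables (R : realType) (d : nat).

(* points of R^d are functions 'I_d -> R; labels are integers in {-1,+1} *)
Definition point := 'I_d -> R.
Definition hypothesis := point -> int.

Definition h_box (a : point) : hypothesis :=
  fun x => 2 * ((([exists i, a i <= x i] : bool) : nat)%:Z) - 1.

Definition H_box : hypothesis -> Prop :=
  fun h => exists a : point, (forall i, 0 <= a i) /\ h = h_box a.

Variable m : nat.

(* A (deterministic, adaptive) auditing algorithm on a pool indexed by 'I_m:
   given the history of (queried index, revealed label) pairs, it either
   queries a further pool point (Some i) or stops (None) and outputs a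
   hypothesis computed from the history. *)
Record algorithm := Algorithm {
  next_query : seq ('I_m * int) -> option 'I_m;
  output : seq ('I_m * int) -> hypothesis }.

Fixpoint exec (A : algorithm) (L : 'I_m -> int) (fuel : nat)
    (hist : seq ('I_m * int)) : option (seq ('I_m * int)) :=
  match fuel with
  | 0 => None
  | fuel'.+1 =>
      match next_query A hist with
      | None => Some hist
      | Some i => exec A L fuel' (rcons hist (i, L i))
      end
  end.

Definition stops (A : algorithm) (L : 'I_m -> int) (hist : seq ('I_m * int)) :=
  exists fuel, exec A L fuel [::] = Some hist.

Definition consistent (H : hypothesis -> Prop) (S : 'I_m -> point)
    (L : 'I_m -> int) := exists h, H h /\ forall j, L j = h (S j).

Definition audits (H : hypothesis -> Prop) (S : 'I_m -> point) (A : algorithm) :=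
  forall L, consistent H S L ->
    exists hist, stops A L hist /\ forall j, output A hist (S j) = L j.

Definition neg_queries (L : 'I_m -> int) (hist : seq ('I_m * int)) : nat :=
  #|[pred j : 'I_m | (j \in [seq p.1 | p <- hist]) && (L j == -1)]|.

(* "auditing complexity of S w.r.t. H is at most k": the minimum over valid
   algorithms of the worst-case number of negative queries is <= k, i.e.
   some valid algorithm has worst case <= k. *)
Definition auditing_complexity_le (H : hypothesis -> Prop) (S : 'I_m -> point)
    (k : nat) :=
  exists A, audits H S A /\
    forall L, consistent H S L ->
      forall hist, stops A L hist -> (neg_queries L hist <= k)%N.

End Auditing.

(* Main.v *)
Require Import Defs.
From mathcomp Require Import all_boot all_order all_algebra.
From mathcomp Require Import reals.
Import Order.TTheory GRing.Theory Num.Theory.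
Local Open Scope ring_scope.
Set Implicit Arguments. Unset Strict Implicit.

Section Proof.
Variables (R : realType) (d m : nat) (S : 'I_m -> 'I_d -> R).

Definition negs (h : seq ('I_m * int)) : seq 'I_m :=
  [seq p.1 | p <- h & p.2 == -1].

Definition cand (h : seq ('I_m * int)) (i : 'I_d) (j : 'I_m) : bool :=
  (j \notin [seq p.1 | p <- h]) && all (fun n => S n i < S j i) (negs h).

Definition pickq (h : seq ('I_m * int)) : option ('I_d * 'I_m) :=
  [pick p : 'I_d * 'I_m | cand h p.1 p.2 &&
     [forall j', cand h p.1 j' ==> (S j' p.1 <= S p.2 p.1)]].

Definition outp (h : seq ('I_m * int)) : hypothesis R d :=
  fun x => if [forall i : 'I_d, has (fun n => x i <= S n i) (negs h)]
           then -1 else 1.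

Definition alg : algorithm R d m := Algorithm (fun h => omap snd (pickq h)) outp.

Definition valid (L : 'I_m -> int) (hist : seq ('I_m * int)) :=
  forall h1 p h2, hist = h1 ++ p :: h2 ->
    next_query alg h1 = Some p.1 /\ p.2 = L p.1.

Lemma valid_nil L : valid L [::].
Proof. by move=> [|? ?] ? ?. Qed.

Lemma valid_rcons L h i : valid L h -> next_query alg h = Some i ->
  valid L (rcons h (i, L i)).
Proof.
move=> vh hq h1 p h2; case/lastP: h2 => [|h2 y].
  rewrite cats1 => /rcons_inj E; case: E => E1 E2.
  by subst.
rewrite -rcons_cons -rcons_cat => /rcons_inj E; case: E => E1 E2.
subst; exact: (vh h1 p h2).
Qed.

Lemma exec_valid L fuel h hist : valid L h -> exec alg L fuel h = Some hist ->
  valid L hist /\ next_query alg hist = None.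
Proof.
elim: fuel h => [//|n IH] h vh.
change (exec alg L n.+1 h) with (match next_query alg h with
  None => Some h | Some i => exec alg L n (rcons h (i, L i)) end).
case E: (next_query alg h) => [i|].
  by apply: IH; apply: valid_rcons.
by case=> <-.
Qed.

Lemma pickq_fresh h p : pickq h = Some p -> p.2 \notin [seq q.1 | q <- h].
Proof.
rewrite /pickq; case: pickP => // q /andP [/andP [H _] _] [<-]; exact: H.
Qed.

Lemma exec_term L n h :
  (#|[pred j | j \notin [seq q.1 | q <- h]]| < n)%N ->
  exists hist, exec alg L n h = Some hist.
Proof.
elim: n h => [//|n IH] h hlt.
change (exec alg L n.+1 h) with (match next_query alg h with
  None => Some h | Some i => exec alg L n (rcons h (i, L i)) end).
case E: (next_query alg h) => [i|]; last by exists h.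
apply: IH.
move: E => /=; case E: (pickq h) => [p|] //= [<-].
have fr := pickq_fresh E.
rewrite (cardD1 p.2) inE fr in hlt.
move: hlt; rewrite add1n ltnS; apply: leq_trans; rewrite ltnS; apply/eq_leq/eq_card => j.
by rewrite !inE map_rcons mem_rcons negb_or.
Qed.

Lemma pickq_none h : pickq h = None -> forall i j, ~~ cand h i j.
Proof.
move=> E i j; apply/negP => cj.
case: (arg_maxP (fun j => S j i) cj) => j' cj' mx.
move: E; rewrite /pickq; case: pickP => [//|H _].
have := H (i, j'); rewrite /= cj' /= => /negbT/negP; apply.
apply/forallP => k; apply/implyP.
exact: mx.
Qed.

Lemma valid_mem L hist p : valid L hist -> p \in hist -> p.2 = L p.1.
Proof. move=> vh pin; case/splitPr E: {1}hist / pin => [h1 h2].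
by case: (vh h1 p h2 E). Qed.


Lemma pickq_spec h p : pickq h = Some p ->
  cand h p.1 p.2 /\ forall j', cand h p.1 j' -> S j' p.1 <= S p.2 p.1.
Proof.
rewrite /pickq; case: pickP => // q /andP [c /forallP mx] [<-]; split => //.
by move=> j' cj'; move: (mx j') => /implyP; apply.
Qed.

Lemma take_mono (T : eqType) (s : seq T) k1 k2 x : (k1 <= k2)%N ->
  x \in take k1 s -> x \in take k2 s.
Proof. by move=> le; rewrite -(take_takel s le) => /mem_take. Qed.

Lemma negs_mono h k1 k2 n : (k1 <= k2)%N ->
  n \in negs (take k1 h) -> n \in negs (take k2 h).
Proof.
move=> le /mapP [p]; rewrite mem_filter => /andP [p2 pin] ->.
by apply/mapP; exists p => //; rewrite mem_filter p2 (take_mono le pin).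
Qed.

Lemma qinfo L hist j : valid L hist -> j \in [seq p.1 | p <- hist] ->
  exists i, pickq (take (index j [seq p.1 | p <- hist]) hist) = Some (i, j) /\
    (j, L j) \in take (index j [seq p.1 | p <- hist]).+1 hist.
Proof.
move=> vh jin.
set k := index j _.
have kl : (k < size hist)%N by rewrite -(size_map fst) index_mem.
have nthj : (nth (j, 0) hist k).1 = j.
  by rewrite -(nth_map (j, 0) j fst kl) nth_index.
have E : hist = take k hist ++ nth (j, 0) hist k :: drop k.+1 hist.
  by rewrite -drop_nth // cat_take_drop.
case: (vh _ _ _ E) => nq lab.
move: nq => /=; case P: (pickq _) => [[i j']|] //= [ej].
exists i; split.
  by rewrite ej nthj.
have ne : nth (j, 0) hist k = (j, L j).
  by move: nthj lab; case: (nth _ _ _) => a b /= -> ->.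
by rewrite (take_nth (j, 0) kl) ne mem_rcons in_cons eqxx.
Qed.

Lemma negs_lab L hist n : valid L hist -> n \in negs hist -> L n = -1.
Proof.
move=> vh /mapP [p]; rewrite mem_filter => /andP [/eqP p2 pin] ->.
by rewrite -(valid_mem vh pin).
Qed.

Lemma hbox_val (a : point R d) x :
  h_box a x = if [exists i, a i <= x i] then 1 else -1.
Proof. by rewrite /h_box; case: [exists i, _]. Qed.

Lemma out_ok L hist : consistent (@H_box R d) S L -> valid L hist ->
  next_query alg hist = None -> forall j, outp hist (S j) = L j.
Proof.
move=> [h [[a [_ ->]] HL]] vh nq j.
have negsa : forall n, n \in negs hist -> forall i, S n i < a i.
  move=> n nin i; have := negs_lab vh nin; rewrite HL hbox_val.
  case: ifP => // /negbT; rewrite negb_exists => /forallP /(_ i).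
  by rewrite -ltNge.
rewrite HL hbox_val /outp.
case: (boolP [exists i, a i <= S j i]) => [/existsP [i ai]|]; last first.
  rewrite negb_exists => /forallP na.
  have -> // : [forall i, has (fun n => S j i <= S n i) (negs hist)].
  apply/forallP => i.
  case jin: (j \in [seq p.1 | p <- hist]).
    have [p pin pj] : exists2 p, p \in hist & p.1 = j.
      by case/mapP: jin => p pin ->; exists p.
    apply/hasP; exists j => //; apply/mapP; exists p => //.
    rewrite mem_filter pin (valid_mem vh pin) pj HL hbox_val.
    have -> : [exists i, a i <= S j i] = false.
      by apply/negbTE; rewrite negb_exists; apply/forallP.
    by [].
  move: nq => /=; case P: (pickq hist) => // _.
  have := pickq_none P i j; rewrite /cand jin /= -has_predC.
  apply: sub_has => n /=; by rewrite -leNgt.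
case: ifP => // /forallP /(_ i) /hasP [n nin le].
have := negsa n nin i; rewrite ltNge.
by rewrite (le_trans ai le).
Qed.

Lemma count_ok L hist (i0 : 'I_d) : valid L hist ->
  (neg_queries L hist <= d)%N.
Proof.
move=> vh.
pose f j := match pickq (take (index j [seq p.1 | p <- hist]) hist) with
  Some p => p.1 | None => i0 end.
rewrite /neg_queries -[X in (_ <= X)%N](card_ord d).
apply: (leq_card_in f) => j1 j2 /andP [j1in /eqP l1] /andP [j2in /eqP l2] ef.
have [i1 [P1 M1]] := qinfo vh j1in.
have [i2 [P2 M2]] := qinfo vh j2in.
rewrite /f P1 P2 /= in ef; subst i2.
have key : forall k1 k2 ja jb, (k1 < k2)%N ->
    pickq (take k1 hist) = Some (i1, ja) -> pickq (take k2 hist) = Some (i1, jb) ->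
    L ja = -1 -> (ja, L ja) \in take k1.+1 hist -> False.
  move=> k1 k2 ja jb lt Pa Pb la Ma.
  have [ca mxa] := pickq_spec Pa.
  have [cb _] := pickq_spec Pb.
  move: cb => /= /andP [nb /allP alb].
  have jan : ja \in negs (take k2 hist).
    apply/mapP; exists (ja, L ja) => //.
    by rewrite mem_filter (take_mono lt Ma) la eqxx.
  have lt1 := alb _ jan.
  have cb1 : cand (take k1 hist) i1 jb.
    apply/andP; split.
      apply: contra nb => /mapP [p pin ->]; apply/mapP; exists p => //.
      exact: take_mono (ltnW lt) pin.
    apply/allP => n nin; apply: alb; exact: negs_mono (ltnW lt) nin.
  have := mxa _ cb1 => /=.
  by rewrite leNgt lt1.
case: (ltngtP (index j1 [seq p.1 | p <- hist]) (index j2 [seq p.1 | p <- hist])).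
- by move=> lt; case: (key _ _ _ _ lt P1 P2 l1 M1).
- by move=> lt; case: (key _ _ _ _ lt P2 P1 l2 M2).
- by move=> e; move: P1; rewrite e P2 => -[].
Qed.

End Proof.

Theorem theorem3 (R : realType) (d m : nat) (hd : (1 <= d)%N)
    (S : 'I_m -> 'I_d -> R) (hS : forall j i, 0 <= S j i) :
  auditing_complexity_le (@H_box R d) S d.
Proof.
exists (alg S); split.
  move=> L cL.
  have [hist ex] : exists hist, exec (alg S) L m.+1 [::] = Some hist.
    apply: exec_term; rewrite ltnS; apply: leq_trans (max_card _) _.
    by rewrite card_ord.
  have [vh nq] := exec_valid (valid_nil S L) ex.
  exists hist; split; first by exists m.+1.
  exact: out_ok cL vh nq.
move=> L cL hist [fuel ex].
have [vh _] := exec_valid (valid_nil S L) ex.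
exact: count_ok (Ordinal hd) vh.
Qed.
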